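(* Let $(Q,\rightarrow)$ be a finite transition system, $\mathscr{R}$ a preorder on $Q$ and $\mathscr{P}\subseteq\mathscr{R}$ an equivalence relation with a representative $E.\mathrm{rep}\in E$ fixed for each block $E$ of $\mathscr{P}$, such that there is no $(\mathscr{P},\mathscr{R})$-splitter transition of type 1 and no $(\mathscr{P},\mathscr{R})$-splitter transition of type 2. Then $\mathscr{P}$ is $\mathscr{R}$-block-stable.
   Context: A preorder is a reflexive transitive relation; its blocks are $[q]_{\mathscr{R}}=\{q'\mid q\,\mathscr{R}\,q'\wedge q'\,\mathscr{R}\,q\}$. $\mathscr{R}(X)=\{q'\mid\exists q\in X.\ q\,\mathscr{R}\,q'\}$, $\rightarrow^{-1}(Y)=\{q\mid\exists y\in Y.\ q\rightarrow y\}$; for sets, $X\rightarrow Y$ means some $x\in X,y\in Y$ have $x\rightarrow y$, and $X\,\mathscr{R}\,Y$ means $(X\times Y)\cap\mathscr{R}\neq\emptyset$. For a block $E$ of $\mathscr{P}$ and a block $B$ of $\mathscr{R}$, $\mathrm{RelCount}_{(\mathscr{P},\mathscr{R})}(E,B)=|\{E'\text{ block of }\mathscr{P}\mid E.\mathrm{rep}\rightarrow E'\wedge B\,\mathscr{R}\,E'\}|$. A splitter transition of type 1 is a pair ($E$ block of $\mathscr{P}$, $B$ block of $\mathscr{R}$) with $E\rightarrow B$ and $\mathrm{RelCount}_{(\mathscr{P},\mathscr{R})}(E,B)=0$. A splitter transition of type 2 is a pair ($E$, $B$) with $E.\mathrm{rep}\rightarrow B$, $\mathrm{RelCount}_{(\mathscr{P},\mathscr{R})}(E,B)=|\{[b]_{\mathscr{P}}\subseteq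 B\mid E.\mathrm{rep}\rightarrow b\}|$ and $E\not\subseteq\rightarrow^{-1}(B)$. $\mathscr{P}$ is $\mathscr{R}$-block-stable if for all $b,d,d'$ with $d\,\mathscr{P}\,d'$: $d\in\rightarrow^{-1}(\mathscr{R}(b))\iff d'\in\rightarrow^{-1}(\mathscr{R}(b))$. *)

(* Defs.v *)
From mathcomp Require Import all_boot.
Set Implicit Arguments.
Unset Strict Implicit.
Unset Printing Implicit Defensive.

Section Defs.
Variable Q : finType.

Definition is_preorder (R : rel Q) : Prop := reflexive R /\ transitive R.
Definition is_equivalence (P : rel Q) : Prop :=
  [/\ reflexive P, symmetric P & transitive P].
Definition subrel_of (P R : rel Q) : Prop := forall x y, P x y -> R x y.

Definition blk (R : rel Q) (q : Q) : {set Q} := [set q' | R q q' && R q' q].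
Definition is_block (R : rel Q) (X : {set Q}) : bool := [exists q, X == blk R q].
Definition img (R : rel Q) (X : {set Q}) : {set Q} :=
  [set q' | [exists q in X, R q q']].
Definition pre (tr : rel Q) (Y : {set Q}) : {set Q} :=
  [set q | [exists y in Y, tr q y]].
Definition trS (tr : rel Q) (X Y : {set Q}) : bool :=
  [exists x in X, exists y in Y, tr x y].
Definition relS (R : rel Q) (X Y : {set Q}) : bool :=
  [exists x in X, exists y in Y, R x y].

Definition RelCount (tr P R : rel Q) (rep : {set Q} -> Q) (E B : {set Q}) : nat :=
  #|[set E' : {set Q} | [&& is_block P E', trS tr [set rep E] E' & relS R B E']]|.

Definition SubCount (tr P : rel Q) (rep : {set Q} -> Q) (E B : {set Q}) : nat :=
  #|[set E' : {set Q} |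
      [exists b, [&& E' == blk P b, blk P b \subset B & tr (rep E) b]]]|.

Definition splitter1 (tr P R : rel Q) (rep : {set Q} -> Q) (E B : {set Q}) : Prop :=
  [/\ is_block P E, is_block R B, trS tr E B & RelCount tr P R rep E B = 0].

Definition splitter2 (tr P R : rel Q) (rep : {set Q} -> Q) (E B : {set Q}) : Prop :=
  [/\ is_block P E, is_block R B, [exists b in B, tr (rep E) b],
      RelCount tr P R rep E B = SubCount tr P rep E B
    & ~~ (E \subset pre tr B)].

Definition block_stable (tr P R : rel Q) : Prop :=
  forall b d d', P d d' ->
    (d \in pre tr (img R [set b])) <-> (d' \in pre tr (img R [set b])).

End Defs.

(* Main.v *)
Require Import Defs.
From mathcomp Require Import all_boot.

Theorem theorem2 (Q : finType) (tr R P : rel Q) (rep : {set Q} -> Q)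
  (HR : is_preorder R) (HP : is_equivalence P) (HPR : subrel_of P R)
  (Hrep : forall E : {set Q}, is_block P E -> rep E \in E)
  (Hno1 : forall E B : {set Q}, ~ splitter1 tr P R rep E B)
  (Hno2 : forall E B : {set Q}, ~ splitter2 tr P R rep E B) :
  block_stable tr P R.
Proof.
case: HR => Rr Rt; case: HP => Pr Ps Pt.
have blkP : forall c y, y \in blk P c -> blk P c = blk P y.
  move=> c y; rewrite inE => /andP [Hcy Hyc]; apply/setP => w; rewrite !inE.
  apply/andP/andP => [[H1 H2]|[H1 H2]]; split.
  - exact: Pt Hyc H1.
  - exact: Pt H2 Hcy.
  - exact: Pt H1.
  - exact: Pt Hyc.
have inblk : forall c, c \in blk P c by move=> c; rewrite inE Pr.
have key : forall b d, d \in pre tr (img R [set b]) ->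
    forall d', d' \in blk P d -> d' \in pre tr (img R [set b]).
  move=> b d Hd.
  set E := blk P d; set r := rep E.
  have EB : is_block P E by apply/existsP; exists d.
  have [q0 Hrq0 Hbq0] : exists2 q, tr r q & R b q.
    move: Hd; rewrite inE => /existsP [q /andP [Hq Hdq]].
    move: Hq; rewrite inE => /existsP [x /andP [Hx Hxq]].
    move: Hx; rewrite inE => /eqP Hx; subst x.
    have : RelCount tr P R rep E (blk R q) != 0.
      apply/eqP => H0; apply: (Hno1 E (blk R q)); split => //.
      - by apply/existsP; exists q.
      - apply/existsP; exists d; rewrite inblk /=.
        by apply/existsP; exists q; rewrite inE !Rr Hdq.
    rewrite /RelCount cards_eq0 => /set0Pn [E'].
    rewrite inE => /and3P [/existsP [c /eqP HE'] Htr Hrel].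
    move: Htr => /existsP [x /andP [Hx /existsP [y /andP [Hy Hxy]]]].
    move: Hx; rewrite inE => /eqP Hx; subst x.
    move: Hrel => /existsP [x /andP [Hx /existsP [z /andP [Hz Hxz]]]].
    exists y => //.
    move: Hx; rewrite inE => /andP [Hqx _].
    move: Hz Hy; rewrite HE' !inE => /andP [_ Hzc] /andP [Hcy _].
    apply: (Rt q) => //; apply: (Rt x) => //; apply: (Rt z) => //.
    apply: (Rt c); exact: HPR.
  suff main : forall n q, #|[set y | R q y]| <= n -> tr r q -> R b q ->
      forall d', d' \in E -> d' \in pre tr (img R [set b]).
    by apply: main (leqnn _) Hrq0 Hbq0.
  elim=> [|n IH] q Hn Hrq Hbq.
    by move: Hn; rewrite leqn0 cards_eq0 => /eqP /setP /(_ q); rewrite !inE Rr.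
  have [Hsub|Hnsub] := boolP (E \subset pre tr (blk R q)).
    move=> d' /(subsetP Hsub); rewrite inE => /existsP [y /andP [Hy Hd'y]].
    rewrite inE; apply/existsP; exists y; rewrite Hd'y andbT inE.
    apply/existsP; exists b; rewrite inE eqxx /=.
    by move: Hy; rewrite inE => /andP [Hqy _]; apply: Rt Hbq Hqy.
  have [e' /and3P [Hre' Hqe' Hnot]] :
      exists e', [&& tr r e', R q e' & ~~ R e' q].
    apply/existsP; apply: contraT => Hno.
    have Hall : forall y, tr r y -> R q y -> R y q.
      move=> y H1 H2; apply: contraNT Hno => H3.
      by apply/existsP; exists y; rewrite H1 H2 H3.
    case: (Hno2 E (blk R q)); split => //.
    - by apply/existsP; exists q.
    - by apply/existsP; exists q; rewrite inE !Rr Hrq.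
    rewrite /RelCount /SubCount; apply: eq_card => E'; rewrite !inE.
    apply/idP/idP.
    - move=> /and3P [/existsP [c /eqP HE'] Htr Hrel].
      move: Htr => /existsP [x /andP [Hx /existsP [y /andP [Hy Hxy]]]].
      move: Hx; rewrite inE => /eqP Hx; subst x.
      move: Hrel => /existsP [x /andP [Hx /existsP [z /andP [Hz Hxz]]]].
      move: Hx; rewrite inE => /andP [Hqx _].
      have Hy' := Hy.
      move: Hz Hy; rewrite HE' !inE => /andP [_ Hzc] /andP [Hcy _].
      have Hqy : R q y.
        apply: (Rt x) => //; apply: (Rt z) => //.
        apply: (Rt c); exact: HPR.
      have Hyq := Hall y Hxy Hqy.
      apply/existsP; exists y; have Hb : blk P c = blk P y by apply: blkP; rewrite -HE'.
      rewrite Hb eqxx Hxy andbT /=.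
      apply/subsetP => w; rewrite !inE => /andP [Hyw Hwy].
      by rewrite (Rt y q w Hqy (HPR _ _ Hyw)) (Rt y w q (HPR _ _ Hwy) Hyq).
    - move=> /existsP [b0 /and3P [/eqP HE' Hs Htr]].
      rewrite HE'; apply/and3P; split.
      + by apply/existsP; exists b0.
      + apply/existsP; exists r; rewrite inE eqxx /=.
        by apply/existsP; exists b0; rewrite inblk Htr.
      + apply/existsP; exists b0; rewrite (subsetP Hs _ (inblk b0)) /=.
        by apply/existsP; exists b0; rewrite inblk Rr.
  apply: (IH e') => //; last by apply: Rt Hbq Hqe'.
  rewrite -ltnS; apply: leq_trans Hn; apply: proper_card.
  rewrite properE; apply/andP; split.
    apply/subsetP => w; rewrite !inE => Hw; exact: Rt Hqe' Hw.
  apply/subsetPn; exists q; rewrite !inE ?Rr //.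
move=> b d d' Hdd'; split => H.
  by apply: (key b d H); rewrite inE Hdd' Ps.
by apply: (key b d' H); rewrite inE Hdd' andbT Ps.
Qed.
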